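(* Let $G$ be a group, $E$ a real Banach space, $f\colon G\to E$ a $(G;E)$-pseudo-Jensen function, and $b\in G$ an element of order two. Then $f(b^{-1}xb)=f(x)$ for all $x\in G$.
   Context: A function $f\colon G\to E$ is $(G;E)$-pseudo-Jensen if there is $c>0$ with $\|f(xy)+f(xy^{-1})-2f(x)\|\le c$ for all $x,y\in G$, and $f(x^n)=nf(x)$ for all $x\in G$, $n\in\mathbb{Z}$. *)

(* Defs.v *)
From HB Require Import structures.
From mathcomp Require Import all_boot all_order all_algebra.
From mathcomp Require Import monoid.
From mathcomp Require Import all_classical all_reals all_analysis.
Set Implicit Arguments. Unset Strict Implicit. Unset Printing Implicit Defensive.
Import Order.TTheory GRing.Theory Num.Theory.
Import numFieldNormedType.Exports.
Local Open Scope ring_scope.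

Definition zpowg (G : groupType) (x : G) (z : int) : G :=
  match z with
  | Posz n => (x ^+ n)%g
  | Negz n => (x ^- n.+1)%g
  end.

Definition pseudo_Jensen (R : realType) (G : groupType)
    (E : normedModType R) (f : G -> E) : Prop :=
  (exists2 c : R, 0 < c &
     forall x y : G, `| f (x * y)%g + f (x * y^-1)%g - 2%:R *: f x | <= c)
  /\ (forall (x : G) (n : int), f (zpowg x n) = n%:~R *: f x).

Definition order_two (G : groupType) (b : G) : Prop :=
  (b ^+ 2)%g = 1%g /\ b <> 1%g.

(* Main.v *)
Require Import Defs.
From HB Require Import structures.
From mathcomp Require Import all_boot all_order all_algebra.
From mathcomp Require Import monoid.
From mathcomp Require Import all_classical all_reals all_analysis.
Import Order.TTheory GRing.Theory Num.Theory.
Import numFieldNormedType.Exports.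
Local Open Scope ring_scope.

Lemma idt_aux (R : nzRingType) (E : lmodType R) (u v w : E) :
  2%:R *: (u - w) = (u + u - 2%:R *: v) - (- v + - v - 2%:R *: - w).
Proof. rewrite !scaler_nat !mulr2n !opprD !opprK !addrA !addrNK.
by congr (_ + _); rewrite addrAC. Qed.

Theorem lemma3p13 (R : realType) (G : groupType) (E : completeNormedModType R)
    (f : G -> E) (b : G) :
  pseudo_Jensen f -> order_two b ->
  forall x : G, f (b^-1 * x * b)%g = f x.
Proof.
move=> [[c c0 Hc] Hp] [b2 _].
have finv : forall x : G, f (x^-1)%g = - f x.
  move=> x; have := Hp x (Negz 0); rewrite /= expg1 => ->.
  by rewrite NegzE scaleNr scale1r.
have fpow : forall (x : G) (n : nat), f (x ^+ n)%g = n%:R *: f x.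
  by move=> x n; have := Hp x (Posz n).
have hb : (b^-1 = b)%g by apply: mulg1_eq; rewrite -expg2.
have bnd : forall x : G, `|2%:R *: (f (b^-1 * x * b)%g - f x)| <= c + c.
  move=> x; rewrite hb.
  have A := Hc (b * x)%g b; rewrite hb in A.
  have B := Hc (x^-1)%g b; rewrite hb in B.
  have e : f (x^-1 * b)%g = - f (b * x)%g by rewrite -{1}hb -invgM finv.
  rewrite e finv in B.
  rewrite (idt_aux _ _ _ (f (b * x)%g)).
  by apply: (le_trans (ler_normB _ _)); apply: lerD.
move=> x.
have key : forall n : nat, n%:R * `|2%:R *: (f (b^-1 * x * b)%g - f x)| <= c + c.
  move=> n; have := bnd (x ^+ n)%g.
  have -> : (b^-1 * x ^+ n * b)%g = ((b^-1 * x * b) ^+ n)%g.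
    by rewrite -!mulgA -!conjgE conjXg.
  rewrite !fpow -scalerBr scalerA mulrC -scalerA normrZ ger0_norm //.
set d := `|_| in key.
have d0 : d = 0.
  apply/eqP; rewrite eq_le normr_ge0 andbT; apply/negP => /negP.
  rewrite -ltNge => dpos.
  have := key (Num.truncn ((c + c) / d)).+1.
  apply/negP; rewrite -ltNge -ltr_pdivrMr //.
  exact: truncnS_gt.
move: d0; rewrite /d => /normr0_eq0 /eqP; rewrite scaler_eq0 pnatr_eq0 /= subr_eq0.
by move/eqP.
Qed.
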